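(* Let $\mathbb{Z}[s,u]$ be the polynomial ring in variables $s$ (of degree $4$) and $u$ (of degree $2$). Let $I_2=(3u^4-3su^2+s^2,\ u^6)$ and $J_2=(s^2+su^2+u^4,\ u^6)$. Then the graded rings $\mathbb{Z}[s,u]/I_2$ and $\mathbb{Z}[s,u]/J_2$ are isomorphic.
   Context: In the paper $s$ is written $y_1^2$ with $y_1$ of degree $2$. *)

(* Defs.v *)
From HB Require Import structures.
From mathcomp Require Import all_boot all_algebra.
From mathcomp Require Import ring_quotient generic_quotient.
From mathcomp Require Import mpoly.
From Stdlib Require Import ClassicalEpsilon.

Set Implicit Arguments.
Unset Strict Implicit.
Unset Printing Implicit Defensive.

Import GRing.Theory.
Local Open Scope ring_scope.

Notation Zsu := {mpoly int[2]}.
Definition s : Zsu := 'X_(ord0 : 'I_2).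
Definition u : Zsu := 'X_(ord_max : 'I_2).

Definition wdeg (m : 'X_{1..2}) : nat := (4 * m (ord0 : 'I_2) + 2 * m (ord_max : 'I_2))%N.

Definition homogeneous (d : nat) (p : Zsu) : Prop :=
  forall m, m \in msupp p -> wdeg m = d.

Definition in_ideal2 (g1 g2 : Zsu) (p : Zsu) : bool :=
  if excluded_middle_informative (exists a b : Zsu, p = a * g1 + b * g2)
  then true else false.

Lemma in_ideal2P g1 g2 p :
  reflect (exists a b : Zsu, p = a * g1 + b * g2) (in_ideal2 g1 g2 p).
Proof.
rewrite /in_ideal2; case: excluded_middle_informative => H; by constructor.
Qed.

Definition zero2 : 'I_2 -> int := fun _ => 0.

Lemma ideal2_closed g1 g2 :
  g1.@[zero2] = 0 -> g2.@[zero2] = 0 -> idealr_closed (in_ideal2 g1 g2).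
Proof.
move=> h1 h2; split.
- by apply/in_ideal2P; exists 0, 0; rewrite !mul0r addr0.
- apply/in_ideal2P => -[a [b /(congr1 (fun q : Zsu => q.@[zero2]))]].
  by rewrite mevalD !mevalM h1 h2 !mulr0 addr0 mevalC => /eqP; rewrite oner_eq0.
- move=> c p q /in_ideal2P [a [b ->]] /in_ideal2P [a' [b' ->]].
  apply/in_ideal2P; exists (c * a + a'), (c * b + b').
  by rewrite mulrDr !mulrDl !mulrA; rewrite addrACA.
Qed.

Definition I2g1 : Zsu := 3%:R * u ^+ 4 - 3%:R * s * u ^+ 2 + s ^+ 2.
Definition J2g1 : Zsu := s ^+ 2 + s * u ^+ 2 + u ^+ 4.
Definition g6 : Zsu := u ^+ 6.

Lemma I2g1_0 : I2g1.@[zero2] = 0.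
Proof.
rewrite /I2g1 /s /u !(mevalD, mevalB, mevalN, mevalM, rmorphXn, rmorph_nat, mevalXU) /zero2
  /= !(mulr0, mul0r, subrr, addr0) //.
Qed.

Lemma J2g1_0 : J2g1.@[zero2] = 0.
Proof.
by rewrite /J2g1 /s /u !(mevalD, mevalB, mevalN, mevalM, rmorphXn, rmorph_nat, mevalXU) /zero2
  /= !(mulr0, mul0r, addr0) //.
Qed.

Lemma g6_0 : g6.@[zero2] = 0.
Proof. by rewrite /g6 /u !(mevalM, rmorphXn, mevalXU) /zero2 /= !(mulr0, mul0r). Qed.

Definition I2 : {pred Zsu} := fun p => in_ideal2 I2g1 g6 p.
Definition J2 : {pred Zsu} := fun p => in_ideal2 J2g1 g6 p.

HB.instance Definition _ := isIdealr.Build Zsu I2 (ideal2_closed I2g1_0 g6_0).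
HB.instance Definition _ := isIdealr.Build Zsu J2 (ideal2_closed J2g1_0 g6_0).

(* The quotient rings Z[s,u]/I_2 and Z[s,u]/J_2 (graded by deg s = 4, deg u = 2;
   both ideals are homogeneous). *)
Notation QI2 := {ideal_quot I2}.
Notation QJ2 := {ideal_quot J2}.

Definition graded_piece (Q : Type) (pi : Zsu -> Q) (d : nat) (x : Q) : Prop :=
  exists p : Zsu, homogeneous d p /\ x = pi p.

Definition graded_ring_iso (f : {rmorphism QI2 -> QJ2}) : Prop :=
  bijective f /\
  forall (d : nat) (x : QI2),
    graded_piece (\pi_QI2%qT) d x <-> graded_piece (\pi_QJ2%qT) d (f x).

(* Main.v *)
Set Warnings "-all".
Require Import Defs.
From HB Require Import structures.
From mathcomp Require Import all_boot all_algebra.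
From mathcomp Require Import ring_quotient generic_quotient.
From mathcomp Require Import mpoly.
From mathcomp Require Import ring zify.
Set Warnings "-all".
Import GRing.Theory.
Local Open Scope ring_scope.

Lemma homog0 d : homogeneous d 0.
Proof. by move=> m; rewrite msupp0. Qed.

Lemma homog1 : homogeneous 0 1.
Proof. by move=> m; rewrite msupp1 inE => /eqP ->; rewrite /wdeg !mnm0E. Qed.

Lemma homogD d p q : homogeneous d p -> homogeneous d q -> homogeneous d (p + q).
Proof. by move=> hp hq m /msuppD_le; rewrite mem_cat => /orP[/hp|/hq]. Qed.

Lemma homogZ d c p : homogeneous d p -> homogeneous d (c *: p).
Proof. by move=> hp m /msuppZ_le /hp. Qed.

Lemma homogM d1 d2 p q : homogeneous d1 p -> homogeneous d2 q ->
  homogeneous (d1 + d2) (p * q).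
Proof.
move=> hp hq m /msuppM_le /allpairsP [[m1 m2] /= [/hp <- /hq <- ->]].
rewrite /wdeg !mnmDE; lia.
Qed.

Lemma homogX d p k : homogeneous d p -> homogeneous (d * k) (p ^+ k).
Proof.
move=> hp; elim: k => [|k IH]; first by rewrite muln0 expr0; apply: homog1.
by rewrite exprS mulnS; apply: homogM.
Qed.

Lemma homog_sum d (r : seq 'X_{1..2}) (F : 'X_{1..2} -> Zsu) :
  (forall m, homogeneous d (F m)) -> homogeneous d (\sum_(m <- r) F m).
Proof.
move=> h; elim: r => [|a r IH]; first by rewrite big_nil; apply: homog0.
by rewrite big_cons; apply: homogD.
Qed.

Lemma homog_s : homogeneous 4 s.
Proof. by move=> m; rewrite /s msuppX inE => /eqP ->; rewrite /wdeg !mnm1E. Qed.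

Lemma homog_u : homogeneous 2 u.
Proof. by move=> m; rewrite /u msuppX inE => /eqP ->; rewrite /wdeg !mnm1E. Qed.

Lemma homog_comp (lq : 2.-tuple Zsu) d p :
  homogeneous 4 (tnth lq ord0) -> homogeneous 2 (tnth lq ord_max) ->
  homogeneous d p -> homogeneous d (p \mPo lq).
Proof.
move=> h0 h1 hp; rewrite comp_mpolyEX.
have -> : \sum_(m <- msupp p) p@_m *: ('X_[m] \mPo lq) =
          \sum_(m <- msupp p) (if m \in msupp p then p@_m *: ('X_[m] \mPo lq) else 0).
  by rewrite big_seq_cond [RHS]big_seq_cond; apply: eq_bigr => m /andP[->].
apply: homog_sum => m; case: ifP => hm; last exact: homog0.
apply: homogZ; rewrite comp_mpolyX !big_ord_recl big_ord0 mulr1 -(hp _ hm) /wdeg.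
have -> : lift ord0 ord0 = ord_max :> 'I_2 by apply/val_inj.
by apply: homogM; apply: homogX.
Qed.

Definition phi (p : Zsu) : Zsu := p \mPo [tuple s + 2%:R * u ^+ 2; u].
Definition psi (p : Zsu) : Zsu := p \mPo [tuple s - 2%:R * u ^+ 2; u].


Lemma homog_su2 : homogeneous 4 (2%:R * u ^+ 2).
Proof. have h : homogeneous 4 (u ^+ 2) by have := @homogX 2 u 2 homog_u. by rewrite mulr_natl mulr2n; apply: homogD. Qed.

Lemma homog_phi d p : homogeneous d p -> homogeneous d (phi p).
Proof.
apply: homog_comp => /=; last exact: homog_u.
apply: homogD; [exact: homog_s | exact: homog_su2].
Qed.

Lemma homog_psi d p : homogeneous d p -> homogeneous d (psi p).
Proof.
apply: homog_comp => /=; last exact: homog_u.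
apply: homogD; first exact: homog_s.
by move=> m; rewrite (perm_mem (msuppN _)); apply: homog_su2.
Qed.

Lemma phis : phi s = s + 2%:R * u ^+ 2. Proof. by rewrite /phi /s comp_mpolyXU. Qed.
Lemma phiu : phi u = u. Proof. by rewrite /phi /u comp_mpolyXU. Qed.
Lemma psis : psi s = s - 2%:R * u ^+ 2. Proof. by rewrite /psi /s comp_mpolyXU. Qed.
Lemma psiu : psi u = u. Proof. by rewrite /psi /u comp_mpolyXU. Qed.


Section Morph.
Variable lq : 2.-tuple Zsu.
Local Notation f := (comp_mpoly lq).
Lemma fD p q : f (p + q) = f p + f q. Proof. exact: rmorphD. Qed.
Lemma fN p : f (- p) = - f p. Proof. exact: rmorphN. Qed.
Lemma fM p q : f (p * q) = f p * f q. Proof. exact: rmorphM. Qed.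
Lemma fX p k : f (p ^+ k) = f p ^+ k. Proof. exact: rmorphXn. Qed.
Lemma fn k : f k%:R = k%:R. Proof. exact: rmorph_nat. Qed.
Lemma f_sum (r : seq 'X_{1..2}) (F : 'X_{1..2} -> Zsu) :
  f (\sum_(m <- r) F m) = \sum_(m <- r) f (F m).
Proof. exact: raddf_sum. Qed.
End Morph.

Lemma phiI : phi I2g1 = J2g1.
Proof.
rewrite /I2g1 /J2g1 /phi !(fD, fN, fM, fX, fn) -!/(phi _) phis phiu.
ring.
Qed.

Lemma psiJ : psi J2g1 = I2g1.
Proof.
rewrite /I2g1 /J2g1 /psi !(fD, fN, fM, fX, fn) -!/(psi _) psis psiu.
ring.
Qed.

Lemma phig6 : phi g6 = g6. Proof. by rewrite /g6 /phi fX -/(phi _) phiu. Qed.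
Lemma psig6 : psi g6 = g6. Proof. by rewrite /g6 /psi fX -/(psi _) psiu. Qed.

Lemma XE (m : 'X_{1..2}) : 'X_[m] = s ^+ m ord0 * u ^+ m ord_max :> Zsu.
Proof.
rewrite mpolyXE_id !big_ord_recl big_ord0 mulr1 /s /u.
by have -> : lift ord0 ord0 = ord_max :> 'I_2 by apply/val_inj.
Qed.

Lemma psiphi p : psi (phi p) = p.
Proof.
transitivity (\sum_(m <- msupp p) psi (phi (p@_m *: 'X_[m]))).
  by rewrite {1}[p]mpolyE /phi f_sum /psi f_sum.
rewrite [p in RHS]mpolyE; apply: eq_bigr => m _; rewrite /phi /psi.
rewrite !comp_mpolyZ XE !(fM, fX) -!/(phi _) -!/(psi _) phis phiu.
rewrite /psi !(fD, fM, fX, fn) -!/(psi _) psis psiu.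
by congr (_ *: (_ ^+ _ * _)); rewrite addrNK.
Qed.

Lemma phipsi p : phi (psi p) = p.
Proof.
transitivity (\sum_(m <- msupp p) phi (psi (p@_m *: 'X_[m]))).
  by rewrite {1}[p]mpolyE /psi f_sum /phi f_sum.
rewrite [p in RHS]mpolyE; apply: eq_bigr => m _; rewrite /phi /psi.
rewrite !comp_mpolyZ XE !(fM, fX) -!/(phi _) -!/(psi _) psis psiu.
rewrite /phi !(fD, fN, fM, fX, fn) -!/(phi _) phis phiu.
by congr (_ *: (_ ^+ _ * _)); rewrite addrK.
Qed.

Lemma phi_ideal p : p \in I2 -> phi p \in J2.
Proof.
move=> /in_ideal2P [a [b ->]]; apply/in_ideal2P; exists (phi a), (phi b).
by rewrite /phi fD fM [X in _ + X]fM -!/(phi _) phiI phig6.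
Qed.

Lemma psi_ideal p : p \in J2 -> psi p \in I2.
Proof.
move=> /in_ideal2P [a [b ->]]; apply/in_ideal2P; exists (psi a), (psi b).
by rewrite /psi fD fM [X in _ + X]fM -!/(psi _) psiJ psig6.
Qed.

Lemma phiB p q : phi (p - q) = phi p - phi q.
Proof. by rewrite /phi fD fN. Qed.
Lemma psiB p q : psi (p - q) = psi p - psi q.
Proof. by rewrite /psi fD fN. Qed.

Definition fq (x : QI2) : QJ2 := \pi_QJ2%qT (phi (repr x)).
Definition gq (x : QJ2) : QI2 := \pi_QI2%qT (psi (repr x)).

Lemma fqE p : fq (\pi_QI2%qT p) = \pi_QJ2%qT (phi p).
Proof.
rewrite /fq; apply/eqP; rewrite -Quotient.idealrBE -phiB; apply: phi_ideal.
by rewrite Quotient.idealrBE reprK.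
Qed.

Lemma gqE p : gq (\pi_QJ2%qT p) = \pi_QI2%qT (psi p).
Proof.
rewrite /gq; apply/eqP; rewrite -Quotient.idealrBE -psiB; apply: psi_ideal.
by rewrite Quotient.idealrBE reprK.
Qed.

Lemma fq_zmod : zmod_morphism fq.
Proof.
move=> x y; rewrite -[x]reprK -[y]reprK.
by rewrite -rmorphB !fqE phiB rmorphB.
Qed.

Lemma fq_monoid : monoid_morphism fq.
Proof.
split.
  by rewrite -(rmorph1 (\pi_QI2%qT)) fqE /phi rmorph1 -/(phi _) rmorph1.
move=> x y; rewrite -[x]reprK -[y]reprK.
by rewrite -rmorphM !fqE /phi fM -!/(phi _) rmorphM.
Qed.

HB.instance Definition _ := GRing.isZmodMorphism.Build QI2 QJ2 fq fq_zmod.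
HB.instance Definition _ := GRing.isMonoidMorphism.Build QI2 QJ2 fq fq_monoid.

Lemma gqfq x : gq (fq x) = x.
Proof. by rewrite -[x]reprK fqE gqE psiphi. Qed.
Lemma fqgq x : fq (gq x) = x.
Proof. by rewrite -[x]reprK gqE fqE phipsi. Qed.

Lemma fq_graded d x : graded_piece (\pi_QI2%qT) d x <-> graded_piece (\pi_QJ2%qT) d (fq x).
Proof.
split.
  by case=> p [hp ->]; exists (phi p); split; [exact: homog_phi | rewrite fqE].
case=> q [hq hx]; exists (psi q); split; first exact: homog_psi.
by rewrite -gqE -hx gqfq.
Qed.

Theorem proposition5p4 : exists f : {rmorphism QI2 -> QJ2}, graded_ring_iso f.
Proof.
exists fq; split; first by exists gq; [exact: gqfq | exact: fqgq].
exact: fq_graded.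
Qed.
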